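(* Let $\mathit{Winner}$ be a unary predicate symbol in $\Phi$, and let $\mathit{Lottery}$ be the sentence $\forall x(\mathit{true}\hookrightarrow\neg\mathit{Winner}(x))\land(\mathit{true}\hookrightarrow\exists x\,\mathit{Winner}(x))$ and $\mathit{Crooked}$ the sentence $\exists y\forall x\,(x\ne y\Rightarrow((\mathit{Winner}(x)\lor\mathit{Winner}(y))\hookrightarrow\mathit{Winner}(y)))$. Let $PL=(\mathit{Dom},W,\mathrm{Pl},\pi)$ be a subjective plausibility structure whose plausibility measure is defined on all subsets of $W$, is qualitative (satisfies A2 and A3), and satisfies A2$^\dagger$ and A3$^*$. Then $\mathit{Lottery}\land\mathit{Crooked}\Rightarrow(\mathit{true}\hookrightarrow\mathit{false})$ holds at every world of $PL$.
   Context: The language $\mathcal{L}^{subj}(\Phi)$ over a first-order vocabulary $\Phi$ is the least set containing the atomic first-order formulas (including equalities) and closed under $\neg,\land,\lor,\Rightarrow$, $\forall x$, $\exists x$, and a binary conditional connective $\hookrightarrow$. $\mathit{true},\mathit{false}$ are a fixed tautology and its negation. A plausibility measure on $W$ is $\mathrm{Pl}:2^W\to D$, $(D,\le)$ a partial order with least element $\bot$ and greatest $\top$, $\mathrm{Pl}(W)=\top$, $\mathrm{Pl}(\emptyset)=\bot$, and $A\subseteq B\Rightarrow\mathrm{Pl}(A)\le\mathrm{Pl}(B)$; $d<d'$ means $d\le d'$ and $d\ne d'$. A subjective plausibility structure is $(\mathit{Dom},W,\mathrm{Pl},\pi)$ with $\mathit{Dom}$ a nonempty set and $\pi(w)$ an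 interpretation of $\Phi$ over $\mathit{Dom}$ for each $w\in W$. Valuations map variables to $\mathit{Dom}$; $v\sim_x v'$ means they agree except possibly on $x$. Satisfaction at $(w,v)$ is as in first-order logic in $(\mathit{Dom},\pi(w))$ for atomic formulas and Boolean connectives; $\forall x\phi$ holds at $(w,v)$ iff $\phi$ holds at $(w,v')$ for all $v'\sim_x v$; $\phi\hookrightarrow\psi$ holds at $(w,v)$ iff $\mathrm{Pl}([\![\phi]\!]_v)=\bot$ or $\mathrm{Pl}([\![\phi\land\psi]\!]_v)>\mathrm{Pl}([\![\phi\land\neg\psi]\!]_v)$, where $[\![\phi]\!]_v=\{w\in W:\phi\text{ holds at }(w,v)\}$. A2: for pairwise disjoint $A,B,C$, if $\mathrm{Pl}(A\cup B)>\mathrm{Pl}(C)$ and $\mathrm{Pl}(A\cup C)>\mathrm{Pl}(B)$ then $\mathrm{Pl}(A)>\mathrm{Pl}(B\cup C)$. A3: $\mathrm{Pl}(A)=\mathrm{Pl}(B)=\bot$ implies $\mathrm{Pl}(A\cup B)=\bot$. A2$^\dagger$: whenever $\{A_i:i\in I\}$ are pairwise disjoint subsets of $W$ with $0\in I$, $A=\bigcup_{i\in I}A_i$, and $\mathrm{Pl}(A_0)>\mathrm{Pl}(A_i)$ for all $i\in I\setminus\{0\}$, then not $\mathrm{Pl}(A_0)<\mathrm{Pl}(A\setminus A_0)$. A3$^*$: for every family $\{A_i:i\in I\}$ of subsets of $W$ with $\mathrm{Pl}(A_i)=\bot$ for all $i$, $\mathrm{Pl}(\bigcup_iA_i)=\bot$.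 *)

(* Defs.v *)
From Stdlib Require Import List.
Import ListNotations.

Set Implicit Arguments.

(** A first-order vocabulary: function symbols and predicate symbols.
    (Arities are not tracked; symbols are applied to lists of terms and
    interpreted as functions/relations on lists of domain elements.) *)
Record vocab := Vocab { fsym : Type; psym : Type }.

Inductive term (Phi : vocab) : Type :=
| Var : nat -> term Phi
| App : fsym Phi -> list (term Phi) -> term Phi.

Inductive form (Phi : vocab) : Type :=
| Atom   : psym Phi -> list (term Phi) -> form Phi
| Eq     : term Phi -> term Phi -> form Phi
| Not    : form Phi -> form Phi
| And    : form Phi -> form Phi -> form Phi
| Or     : form Phi -> form Phi -> form Phi
| Imp    : form Phi -> form Phi -> form Phi
| Forall : nat -> form Phi -> form Phi
| Exists : nat -> form Phi -> form Phi
| Cond   : form Phi -> form Phi -> form Phi.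

Arguments Var {Phi}.
Arguments App {Phi}.
Arguments Atom {Phi}.
Arguments Eq {Phi}.
Arguments Not {Phi}.
Arguments And {Phi}.
Arguments Or {Phi}.
Arguments Imp {Phi}.
Arguments Forall {Phi}.
Arguments Exists {Phi}.
Arguments Cond {Phi}.

Definition ftrue {Phi : vocab} : form Phi := Forall 0 (Eq (Var 0) (Var 0)).
Definition ffalse {Phi : vocab} : form Phi := Not ftrue.

Record plaus_measure (W : Type) := PlausMeasure {
  pl_D : Type;
  pl_le : pl_D -> pl_D -> Prop;
  pl_le_refl : forall d, pl_le d d;
  pl_le_antisym : forall d d', pl_le d d' -> pl_le d' d -> d = d';
  pl_le_trans : forall d d' d'', pl_le d d' -> pl_le d' d'' -> pl_le d d'';
  pl_bot : pl_D;
  pl_top : pl_D;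
  pl_bot_least : forall d, pl_le pl_bot d;
  pl_top_greatest : forall d, pl_le d pl_top;
  Pl : (W -> Prop) -> pl_D;
  Pl_full : Pl (fun _ => True) = pl_top;
  Pl_empty : Pl (fun _ => False) = pl_bot;
  Pl_mono : forall A B : W -> Prop, (forall w, A w -> B w) -> pl_le (Pl A) (Pl B)
}.

Arguments pl_le {W} p _ _.
Arguments pl_bot {W} p.
Arguments Pl {W} p _.

Definition pl_lt {W} (P : plaus_measure W) (d d' : pl_D P) : Prop :=
  pl_le P d d' /\ d <> d'.

Definition disjoint {W} (A B : W -> Prop) : Prop := forall w, A w -> B w -> False.
Definition union {W} (A B : W -> Prop) : W -> Prop := fun w => A w \/ B w.

Definition axiom_A2 {W} (P : plaus_measure W) : Prop :=
  forall A B C : W -> Prop,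
    disjoint A B -> disjoint A C -> disjoint B C ->
    pl_lt P (Pl P C) (Pl P (union A B)) ->
    pl_lt P (Pl P B) (Pl P (union A C)) ->
    pl_lt P (Pl P (union B C)) (Pl P A).

Definition axiom_A3 {W} (P : plaus_measure W) : Prop :=
  forall A B : W -> Prop,
    Pl P A = pl_bot P -> Pl P B = pl_bot P -> Pl P (union A B) = pl_bot P.

Definition qualitative {W} (P : plaus_measure W) : Prop :=
  axiom_A2 P /\ axiom_A3 P.

Definition axiom_A2dagger {W} (P : plaus_measure W) : Prop :=
  forall (I : Type) (i0 : I) (Af : I -> W -> Prop),
    (forall i j, i <> j -> disjoint (Af i) (Af j)) ->
    (forall i, i <> i0 -> pl_lt P (Pl P (Af i)) (Pl P (Af i0))) ->
    ~ pl_lt P (Pl P (Af i0))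
              (Pl P (fun w => (exists i, Af i w) /\ ~ Af i0 w)).

Definition axiom_A3star {W} (P : plaus_measure W) : Prop :=
  forall (I : Type) (Af : I -> W -> Prop),
    (forall i, Pl P (Af i) = pl_bot P) ->
    Pl P (fun w => exists i, Af i w) = pl_bot P.

Record interp (Phi : vocab) (Dom : Type) := Interp {
  ifun : fsym Phi -> list Dom -> Dom;
  ipred : psym Phi -> list Dom -> Prop
}.

Record subj_pl_structure (Phi : vocab) := SubjPL {
  sDom : Type;
  sDom_nonempty : inhabited sDom;
  sW : Type;
  sPl : plaus_measure sW;
  spi : sW -> interp Phi sDom
}.

Definition upd {D : Type} (v : nat -> D) (x : nat) (d : D) : nat -> D :=
  fun y => if Nat.eqb y x then d else v y.

Fixpoint eval_term {Phi : vocab} {D : Type} (I : interp Phi D) (v : nat -> D)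
  (t : term Phi) : D :=
  match t with
  | Var x => v x
  | App f ts => ifun I f (map (eval_term I v) ts)
  end.

(** sat M phi v w : phi holds at (w, v).  Note that v' ~_x v iff
    v' = upd v x d for some d. *)
Fixpoint sat {Phi : vocab} (M : subj_pl_structure Phi) (phi : form Phi)
  (v : nat -> sDom M) (w : sW M) {struct phi} : Prop :=
  match phi with
  | Atom p ts => ipred (spi M w) p (map (eval_term (spi M w) v) ts)
  | Eq t1 t2 => eval_term (spi M w) v t1 = eval_term (spi M w) v t2
  | Not p => ~ sat M p v w
  | And p q => sat M p v w /\ sat M q v w
  | Or p q => sat M p v w \/ sat M q v w
  | Imp p q => sat M p v w -> sat M q v w
  | Forall x p => forall d, sat M p (upd v x d) w
  | Exists x p => exists d, sat M p (upd v x d) w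
  | Cond p q =>
      Pl (sPl M) (fun w' => sat M p v w') = pl_bot (sPl M) \/
      pl_lt (sPl M)
        (Pl (sPl M) (fun w' => sat M p v w' /\ ~ sat M q v w'))
        (Pl (sPl M) (fun w' => sat M p v w' /\ sat M q v w'))
  end.

(** The lottery sentences, with x = variable 0 and y = variable 1. *)
Definition Winner {Phi : vocab} (winner : psym Phi) (x : nat) : form Phi :=
  Atom winner [Var x].

Definition Lottery {Phi : vocab} (winner : psym Phi) : form Phi :=
  And (Forall 0 (Cond ftrue (Not (Winner winner 0))))
      (Cond ftrue (Exists 0 (Winner winner 0))).

Definition Crooked {Phi : vocab} (winner : psym Phi) : form Phi :=
  Exists 1 (Forall 0
    (Imp (Not (Eq (Var 0) (Var 1)))
         (Cond (Or (Winner winner 0) (Winner winner 1)) (Winner winner 1)))).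

(* Main.v *)
Require Import Defs.
From Stdlib Require Import Classical FunctionalExtensionality PropExtensionality.

Section Gen.
Variable W : Type.
Variable P : plaus_measure W.

Lemma Pl_ext (A B : W -> Prop) : (forall w, A w <-> B w) -> Pl P A = Pl P B.
Proof.
  intro H. apply pl_le_antisym; apply Pl_mono; intros w; apply H.
Qed.

Lemma le_bot x : pl_le P x (pl_bot P) -> x = pl_bot P.
Proof. intro H. apply pl_le_antisym; auto. apply pl_bot_least. Qed.

Lemma Pl_none (A : W -> Prop) : (forall w, ~ A w) -> Pl P A = pl_bot P.
Proof.
  intro H. apply le_bot. rewrite <- (Pl_empty P). apply Pl_mono. firstorder.
Qed.

Lemma lt_le_trans a b c : pl_lt P a b -> pl_le P b c -> pl_lt P a c.
Proof.
  intros [H1 H2] H3. split. eapply pl_le_trans; eauto.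
  intro E; subst. apply H2. apply pl_le_antisym; auto.
Qed.

Lemma le_lt_trans a b c : pl_le P a b -> pl_lt P b c -> pl_lt P a c.
Proof.
  intros H1 [H2 H3]. split. eapply pl_le_trans; eauto.
  intro E; subst. apply H3. apply pl_le_antisym; auto.
Qed.

Lemma lt_bot x : pl_lt P x (pl_bot P) -> False.
Proof. intros [H1 H2]. apply H2. apply le_bot; auto. Qed.

Lemma bot_lt x : x <> pl_bot P -> pl_lt P (pl_bot P) x.
Proof. intro H. split. apply pl_bot_least. auto. Qed.

Lemma lt_ext (A A' B B' : W -> Prop) :
  (forall w, A w <-> A' w) -> (forall w, B w <-> B' w) ->
  pl_lt P (Pl P A) (Pl P B) -> pl_lt P (Pl P A') (Pl P B').
Proof.
  intros HA HB H. rewrite <- (Pl_ext _ _ HA), <- (Pl_ext _ _ HB). exact H.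
Qed.
End Gen.

Theorem proposition5p8 (Phi : vocab) (winner : psym Phi)
  (PL : subj_pl_structure Phi) :
  qualitative (sPl PL) ->
  axiom_A2dagger (sPl PL) ->
  axiom_A3star (sPl PL) ->
  forall (w : sW PL) (v : nat -> sDom PL),
    sat PL (Imp (And (Lottery winner) (Crooked winner)) (Cond ftrue ffalse)) v w.
Proof.
  intros [A2 A3] A2d A3s w v.
  simpl. unfold upd. simpl. intros [[L1 L2] [c Cr]].
  set (P := sPl PL) in *.
  set (Wp := fun w d => ipred (spi PL w) winner (d :: nil)).
  left.
  apply NNPP. intro NT.
  assert (NT' : Pl P (fun _ => True) <> pl_bot P).
  { intro E. apply NT. rewrite <- E. apply Pl_ext. firstorder. }
  clear NT.
  assert (L1c : pl_lt P (Pl P (fun w => Wp w c)) (Pl P (fun w => ~ Wp w c))).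
  { destruct (L1 c) as [H|H].
    - exfalso. apply NT'. rewrite <- H. apply Pl_ext. firstorder.
    - revert H. apply lt_ext; intro x; unfold Wp; split; try tauto.
      all: try (intros [_ H]; apply NNPP; exact H).
      all: try (intro H; split; auto). }
  assert (L2c : pl_lt P (Pl P (fun w => ~ exists d, Wp w d))
                        (Pl P (fun w => exists d, Wp w d))).
  { destruct L2 as [H|H].
    - exfalso. apply NT'. rewrite <- H. apply Pl_ext. firstorder.
    - revert H. apply lt_ext; intro x; unfold Wp; split; try tauto;
      intro H; split; auto. }
  clear L1 L2.
  assert (Crc : forall d, d <> c ->
    Pl P (fun w => Wp w d \/ Wp w c) = pl_bot P \/
    pl_lt P (Pl P (fun w => (Wp w d \/ Wp w c) /\ ~ Wp w c))
            (Pl P (fun w => (Wp w d \/ Wp w c) /\ Wp w c))).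
  { intros d Hd. exact (Cr d Hd). }
  clear Cr.
  set (A0 := fun w => Wp w c \/ ~ exists d, Wp w d).
  assert (NB : Pl P A0 <> pl_bot P).
  { intro E.
    assert (Ec : Pl P (fun w => Wp w c) = pl_bot P).
    { apply le_bot. rewrite <- E. apply Pl_mono. unfold A0; tauto. }
    assert (En : Pl P (fun w => ~ exists d, Wp w d) = pl_bot P).
    { apply le_bot. rewrite <- E. apply Pl_mono. unfold A0; tauto. }
    assert (Ed : forall d, Pl P (fun w => Wp w d) = pl_bot P).
    { intro d. destruct (classic (d = c)) as [->|Hd]; auto.
      destruct (Crc d Hd) as [H|H].
      - apply le_bot. rewrite <- H. apply Pl_mono. tauto.
      - exfalso. apply (lt_bot _ P (Pl P (fun w => (Wp w d \/ Wp w c) /\ ~ Wp w c))).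
        eapply lt_le_trans. exact H. rewrite <- Ec. apply Pl_mono. tauto. }
    assert (Ee := A3s (sDom PL) (fun d w => Wp w d) Ed). simpl in Ee.
    assert (Eu := A3 _ _ Ee En).
    apply NT'. apply le_bot. rewrite <- Eu. apply Pl_mono. intros x _.
    unfold union. apply classic. }
  assert (Key : forall d, d <> c ->
     pl_lt P (Pl P (fun w => Wp w d /\ ~ Wp w c)) (Pl P A0)).
  { intros d Hd. destruct (Crc d Hd) as [H|H].
    - replace (Pl P (fun w => Wp w d /\ ~ Wp w c)) with (pl_bot P).
      + apply bot_lt; auto.
      + symmetry. apply le_bot. rewrite <- H. apply Pl_mono. tauto.
    - eapply le_lt_trans. 2: eapply lt_le_trans. 2: exact H.
      + apply Pl_mono. tauto.
      + apply Pl_mono. unfold A0; tauto. }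
  set (Rest := fun w => (exists d, Wp w d) /\ ~ Wp w c).
  assert (HA2 : pl_lt P (Pl P A0) (Pl P Rest)).
  { assert (H := A2 Rest (fun w => Wp w c) (fun w => ~ exists d, Wp w d)).
    unfold disjoint, union, Rest in H.
    assert (D1 : forall w, (exists d, Wp w d) /\ ~ Wp w c -> Wp w c -> False) by tauto.
    assert (D2 : forall w, (exists d, Wp w d) /\ ~ Wp w c -> ~ (exists d, Wp w d) -> False) by tauto.
    assert (D3 : forall w, Wp w c -> ~ (exists d, Wp w d) -> False) by eauto.
    specialize (H D1 D2 D3).
    assert (H' : pl_lt P (Pl P (fun w => Wp w c \/ ~ (exists d, Wp w d)))
                   (Pl P (fun w => (exists d, Wp w d) /\ ~ Wp w c))).
    { apply H.
      - eapply lt_ext. 3: exact L2c. intro x; tauto.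
        intro x; split; [intros [d Hd]; destruct (classic (Wp x c)); eauto|].
        intros [[? ?]|?]; eauto.
      - eapply lt_ext. 3: exact L1c. intro x; tauto.
        intro x; split; [intro Hc; destruct (classic (exists d, Wp x d)); tauto|intros [[_ Hn]|Hn] Hc; [auto|apply Hn; exists c; exact Hc]]. }
    exact H'. }
  set (Af := fun (i : option (sDom PL -> Prop)) w =>
     match i with
     | None => A0 w
     | Some Q => ~ Wp w c /\ (exists d, Q d) /\ (forall d, Wp w d <-> Q d)
     end).
  apply (A2d _ None Af).
  - intros [S0|] [T0|] Hij x; simpl; unfold A0.
    + intros [_ [_ H1]] [_ [_ H2]]. apply Hij. f_equal.
      apply functional_extensionality. intro d.
      apply propositional_extensionality. rewrite <- H1, H2. tauto.
    + firstorder.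
    + firstorder.
    + congruence.
  - intros [S0|] Hi; [|congruence]. simpl.
    destruct (classic (exists d, S0 d /\ d <> c)) as [[d [Sd Hd]]|Hn].
    + eapply le_lt_trans. 2: exact (Key d Hd).
      apply Pl_mono. intros x [H1 [_ H2]]. split; auto. apply H2; auto.
    + replace (Pl P _) with (pl_bot P).
      * apply bot_lt; auto.
      * symmetry. apply Pl_none. intros x [H1 [[d Sd] H2]]. apply Hn.
        exists d. split; auto. intro E; subst. apply H1. apply H2; auto.
  - eapply lt_ext. 3: exact HA2. simpl; tauto.
    intro x; unfold Rest; simpl; split.
    + intros [[d Hd] Hc]. split.
      * exists (Some (fun d => Wp x d)). repeat split; eauto; tauto.
      * unfold A0. intros [H|H]; eauto.
    + intros [_ H]. unfold A0 in H. split; [apply NNPP|]; tauto.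
Qed.
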